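(* Let $0<m<L$, $\alpha>0$, $\delta\in(0,1)$, and $\rho_\mathrm{GD}(\delta)=\max(1-\alpha m(1-\delta),\ \alpha L(1+\delta)-1)$. Define for $t,\lambda\in\mathbb{R}$ \[ F(t,\lambda) = -\alpha^2(L-m)^2+2mL\alpha^2\lambda(1-\delta^2) +2\alpha\lambda(m+L)(t-1) + \lambda(2-\delta^2\lambda)(t-1)^2, \] and \[ \rho_\star=\inf\{\rho\ge\rho_\mathrm{GD}(\delta):\ F(\rho,\lambda)\ge0 \text{ and } F(-\rho,\lambda)\ge0 \text{ for some }\lambda\in[0,2/\delta^2]\}. \] Let $\lambda_\star\in[0,2/\delta^2]$ be any number with $F(\rho_\star,\lambda_\star)\ge0$ and $F(-\rho_\star,\lambda_\star)\ge0$. Then: (1) $\min(F(\rho_\star,\lambda_\star),F(-\rho_\star,\lambda_\star))=0$; (2) $\lambda_\star\in(0,2/\delta^2)$; (3) if $\max(F(\rho_\star,\lambda_\star),F(-\rho_\star,\lambda_\star))>0$, then $\rho_\star=\rho_\mathrm{GD}(\delta)$.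
   Context: The infimum defining $\rho_\star$ is over a nonempty set, so $\rho_\star$ is finite, and by continuity of $F$ a number $\lambda_\star$ as in the statement exists. *)

(* Defs.v *)
From HB Require Import structures.
From mathcomp Require Import all_boot all_order all_algebra.
From mathcomp Require Import boolp classical_sets reals.
Set Implicit Arguments. Unset Strict Implicit. Unset Printing Implicit Defensive.
Import Order.TTheory GRing.Theory Num.Theory.
Local Open Scope ring_scope.
Local Open Scope classical_set_scope.

Section Defs.
Variable R : realType.

Definition rhoGD (m L alpha delta : R) : R :=
  Num.max (1 - alpha * m * (1 - delta)) (alpha * L * (1 + delta) - 1).

Definition Fq (m L alpha delta : R) (t lam : R) : R :=
  - alpha ^+ 2 * (L - m) ^+ 2
  + 2 * m * L * alpha ^+ 2 * lam * (1 - delta ^+ 2)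
  + 2 * alpha * lam * (m + L) * (t - 1)
  + lam * (2 - delta ^+ 2 * lam) * (t - 1) ^+ 2.

Definition rho_set (m L alpha delta : R) : set R :=
  [set rho | rhoGD m L alpha delta <= rho /\
     exists lam, 0 <= lam <= 2 / delta ^+ 2 /\
       0 <= Fq m L alpha delta rho lam /\ 0 <= Fq m L alpha delta (- rho) lam].

Definition rho_star (m L alpha delta : R) : R := inf (rho_set m L alpha delta).
End Defs.

(* Main.v *)
Require Import Defs.
From HB Require Import structures.
From mathcomp Require Import all_boot all_order all_algebra.
From mathcomp Require Import boolp classical_sets reals.
From mathcomp Require Import ring lra.
Import Order.TTheory GRing.Theory Num.Theory.
Local Open Scope ring_scope.

Section H.
Variable R : realType.

Lemma small (x D K : R) : 0 < x -> 0 <= K ->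
  exists2 e, 0 < e & forall eps, 0 <= eps <= e -> 0 < x - eps * D - K * eps ^+ 2.
Proof.
move=> hx hK.
have hD := normr_ge0 D.
exists (Num.min 1 (x / (`|D| + K + 1))).
  by rewrite lt_min ltr01 /= divr_gt0 // ltr_pwDr // addr_ge0.
move=> eps /andP[he0]; rewrite le_min => /andP[he1 he2].
have hpos : 0 < `|D| + K + 1 by rewrite ltr_pwDr // addr_ge0.
have h3 : eps * (`|D| + K + 1) <= x by rewrite -ler_pdivlMr.
have h4 : eps * D <= eps * `|D| by rewrite ler_wpM2l // ler_norm.
have h5 : K * eps ^+ 2 <= K * eps.
  have := mulr_ge0 (mulr_ge0 hK he0) ((ltac:(by rewrite subr_ge0) : 0 <= 1 - eps)). nra.
case: (eqVneq eps 0) => [->|hne]; first by rewrite !mul0r expr0n /= mulr0 !subr0.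
have : 0 < eps by rewrite lt_neqAle eq_sym hne.
nra.
Qed.

Section Main.
Variables (m L a d : R).
Hypotheses (hm : 0 < m) (hmL : m < L) (ha : 0 < a) (hd0 : 0 < d) (hd1 : d < 1).
Notation F := (Fq m L a d).
Definition cc (lam : R) := lam * (2 - d ^+ 2 * lam).
Definition Dt (t lam : R) := 2 * a * lam * (m + L) + 2 * cc lam * (t - 1).
Definition Dl (t lam : R) := 2 * m * L * a ^+ 2 * (1 - d ^+ 2) + 2 * a * (m + L) * (t - 1)
   + 2 * (t - 1) ^+ 2 - 2 * d ^+ 2 * lam * (t - 1) ^+ 2.

Lemma Ft_exp t e lam : F (t - e) lam = F t lam - e * Dt t lam + cc lam * e ^+ 2.
Proof. rewrite /Fq /Dt /cc; ring. Qed.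

Lemma Fl_exp t lam h : F t (lam + h) = F t lam + h * Dl t lam - d ^+ 2 * (t - 1) ^+ 2 * h ^+ 2.
Proof. rewrite /Fq /Dl; ring. Qed.

Lemma F_Dl t lam : F t lam = - (a * (L - m)) ^+ 2 + lam * Dl t lam + (d * lam * (t - 1)) ^+ 2.
Proof. rewrite /Fq /Dl; ring. Qed.

Lemma GD1 lam : F (1 - a * m * (1 - d)) lam = - (a * (L - m) - d * lam * (a * m * (1 - d))) ^+ 2.
Proof. rewrite /Fq; ring. Qed.

Lemma GD2 lam : F (1 - a * L * (1 + d)) lam = - (a * (L - m) - d * lam * (a * L * (1 + d))) ^+ 2.
Proof. rewrite /Fq; ring. Qed.

Lemma nondeg t lam : 0 < lam -> F t lam = 0 -> Dl t lam = 0 ->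
  t = 1 - a * m * (1 - d) \/ t = 1 - a * L * (1 + d).
Proof.
move=> hl hF hD.
have [s es] : exists s, s = t - 1 by exists (t - 1).
have [X eX] : exists X, X = a * (L - m) by exists (a * (L - m)).
have hX : 0 < X by rewrite eX mulr_gt0 // subr_gt0.
have h1 : (d * lam * s - X) * (d * lam * s + X) = 0.
  have := F_Dl t lam; rewrite hF hD mulr0 -es -eX => e.
  have -> : (d * lam * s - X) * (d * lam * s + X) = - X ^+ 2 + 0 + (d * lam * s) ^+ 2 by ring.
  by rewrite -e.
move/eqP: h1; rewrite mulf_eq0 => /orP[] /eqP hw.
- have ew : d * lam * s = X by apply/eqP; rewrite -subr_eq0 hw.
  have hs : 0 < s.
    rewrite ltNge; apply/negP => hs.
    have : d * lam * s <= 0 by rewrite pmulr_rle0 // mulr_gt0.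
    by rewrite ew leNgt hX.
  have : Dl t lam = 2 * ((s + a * m * (1 + d)) * (s + a * L * (1 - d))) - 2 * d * s * (d * lam * s - X).
    by rewrite /Dl es eX; ring.
  rewrite ew subrr mulr0 subr0 hD => /esym/eqP.
  have p1 : 0 < s + a * m * (1 + d) by rewrite addr_gt0 // !mulr_gt0 // addr_gt0.
  have p2 : 0 < s + a * L * (1 - d) by rewrite addr_gt0 // !mulr_gt0 ?subr_gt0 // (lt_trans hm hmL).
  by rewrite mulf_eq0 pnatr_eq0 /= mulf_eq0 !gt_eqF.
- have ew : d * lam * s = - X by apply/eqP; rewrite -subr_eq0 opprK hw.
  have : Dl t lam = 2 * ((s + a * m * (1 - d)) * (s + a * L * (1 + d))) - 2 * d * s * (d * lam * s + X).
    by rewrite /Dl es eX; ring.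
  rewrite ew addNr mulr0 subr0 hD => /esym/eqP.
  rewrite mulf_eq0 pnatr_eq0 /= mulf_eq0 => /orP[] /eqP e.
  + left; rewrite -[t](subrK 1) -es; apply/eqP; rewrite -subr_eq0 -e; apply/eqP; ring.
  + right; rewrite -[t](subrK 1) -es; apply/eqP; rewrite -subr_eq0 -e; apply/eqP; ring.
Qed.

Lemma perturb_lam (t1 t2 lam : R) : 0 < lam < 2 / d ^+ 2 -> F t1 lam = 0 -> Dl t1 lam != 0 ->
  0 < F t2 lam ->
  exists lam', [/\ 0 <= lam' <= 2 / d ^+ 2, 0 < F t1 lam' & 0 < F t2 lam'].
Proof.
move=> /andP[hl0 hl2] hF1 hD hF2.
have [sg [sg2 sgD]] : exists sg : R, sg ^+ 2 = 1 /\ sg * Dl t1 lam = `|Dl t1 lam|.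
  have [hp|hn] := ltP 0 (Dl t1 lam).
    by exists 1; rewrite expr1n mul1r gtr0_norm.
  exists (-1); rewrite sqrrN expr1n mulN1r ler0_norm //.
have hDa : 0 < `|Dl t1 lam| by rewrite normr_gt0.
have [e1 he1 H1] := small _ (d ^+ 2 * (t1 - 1) ^+ 2) 0 hDa (lexx 0).
have hK2 : 0 <= d ^+ 2 * (t2 - 1) ^+ 2 by rewrite mulr_ge0 // sqr_ge0.
have [e2 he2 H2] := small _ (- (sg * Dl t2 lam)) _ hF2 hK2.
have hl2' : 0 < 2 / d ^+ 2 - lam by rewrite subr_gt0.
pose h := Num.min (Num.min e1 e2) (Num.min lam (2 / d ^+ 2 - lam)).
have hh : 0 < h by rewrite /h !lt_min he1 he2 hl0 hl2'.
have hh1 : h <= e1 by rewrite /h !ge_min lexx ?orbT.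
have hh2 : h <= e2 by rewrite /h !ge_min lexx ?orbT.
have hh3 : h <= lam by rewrite /h !ge_min lexx ?orbT.
have hh4 : h <= 2 / d ^+ 2 - lam by rewrite /h !ge_min lexx ?orbT.
have hsq : (sg * h) ^+ 2 = h ^+ 2 by rewrite exprMn sg2 mul1r.
have hsg : sg = 1 \/ sg = -1.
  have : (sg - 1) * (sg + 1) = 0 by rewrite -subr_sqr sg2 expr1n subrr.
  move/eqP; rewrite mulf_eq0 => /orP[] /eqP e; [left|right]; apply/eqP.
    by rewrite -subr_eq0 e.
  by rewrite -subr_eq0 opprK e.
exists (lam + sg * h); split.
- by case: hsg => ->; apply/andP; split; lra.
- rewrite Fl_exp hF1 hsq.
  have := H1 h; rewrite hh1 ltW //= => /(_ isT) p.
  rewrite -sgD in p.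
  apply: lt_le_trans (mulr_gt0 hh p) _; rewrite le_eqVlt; apply/orP; left; apply/eqP; ring.
- rewrite Fl_exp hsq.
  have := H2 h; rewrite hh2 ltW //= => /(_ isT) p.
  apply: lt_le_trans p _; rewrite le_eqVlt; apply/orP; left; apply/eqP; ring.
Qed.

Lemma cc_ge0 (lam : R) : 0 <= lam <= 2 / d ^+ 2 -> 0 <= cc lam.
Proof.
move=> /andP[h0 h2].
have hd2 : 0 < d ^+ 2 by rewrite exprn_gt0.
rewrite ler_pdivlMr // in h2.
by rewrite /cc mulr_ge0 // subr_ge0 mulrC.
Qed.

Lemma decrease (rho lam : R) : rhoGD m L a d < rho -> 0 <= lam <= 2 / d ^+ 2 ->
  0 < F rho lam -> 0 < F (- rho) lam -> exists2 r, r < rho & rho_set m L a d r.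
Proof.
move=> hr hl hF1 hF2.
have hc := cc_ge0 _ hl.
have [e1 he1 H1] := small _ (Dt rho lam) 0 hF1 (lexx 0).
have [e2 he2 H2] := small _ (- Dt (- rho) lam) 0 hF2 (lexx 0).
pose h := Num.min (Num.min e1 e2) (rho - rhoGD m L a d).
have hh : 0 < h by rewrite /h !lt_min he1 he2 subr_gt0 hr.
have hh1 : h <= e1 by rewrite /h !ge_min lexx ?orbT.
have hh2 : h <= e2 by rewrite /h !ge_min lexx ?orbT.
have hh3 : h <= rho - rhoGD m L a d by rewrite /h !ge_min lexx ?orbT.
exists (rho - h); first by rewrite ltrBlDr ltrDl.
split; first by rewrite lerBrDl addrC -lerBrDl.
exists lam; split => //; split.
- rewrite Ft_exp.
  have := H1 h; rewrite hh1 ltW //= => /(_ isT) p.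
  have := mulr_ge0 hc (sqr_ge0 h). lra.
- have -> : - (rho - h) = - rho - (- h) by rewrite opprB; ring.
  rewrite Ft_exp.
  have := H2 h; rewrite hh2 ltW //= => /(_ isT) p.
  have := mulr_ge0 hc (sqr_ge0 (- h)). rewrite sqrrN. lra.
Qed.

Lemma Fw (t : R) : 2 * a * (m + L) + a * (L - m) <= `|t - 1| -> 0 <= F t (1 / d ^+ 2).
Proof.
move=> hu.
have hd2 : 0 < d ^+ 2 by rewrite exprn_gt0.
have [s es] : exists s, s = t - 1 by exists (t - 1).
have [X eX] : exists X, X = a * (L - m) by exists (a * (L - m)).
have [P eP] : exists P, P = a * (m + L) by exists (a * (m + L)).
have hX : 0 < X by rewrite eX mulr_gt0 // subr_gt0.
have hP : 0 < P by rewrite eP mulr_gt0 // addr_gt0 // (lt_trans hm hmL).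
have e : F t (1 / d ^+ 2) * d ^+ 2 =
   - X ^+ 2 * d ^+ 2 + 2 * m * L * a ^+ 2 * (1 - d ^+ 2) + 2 * P * s + s ^+ 2.
  rewrite /Fq eX eP es; field; by rewrite gt_eqF.
rewrite -es -eX in hu.
have hu2 : 2 * P + X <= `|s| by rewrite eP; lra.
have hd21 : d ^+ 2 <= 1 by rewrite expr_le1 ?ltW.
have hmLa : 0 <= 2 * m * L * a ^+ 2 * (1 - d ^+ 2).
  rewrite mulr_ge0 ?subr_ge0 // ?mulr_ge0 ?sqr_ge0 // ?ltW // ?(lt_trans hm hmL) //.
have h1 : X ^+ 2 * d ^+ 2 <= X ^+ 2 by rewrite ger_pMr ?exprn_gt0.
have hs2 : s ^+ 2 = `|s| ^+ 2 by rewrite real_normK ?num_real.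
have hPs : - (P * `|s|) <= P * s by rewrite -mulrN; apply: ler_wpM2l; [exact: ltW | rewrite lerNl ler_normr lexx orbT].
have h2 : X * X <= `|s| * (`|s| - 2 * P).
  by apply: ler_pM; [exact: ltW | exact: ltW | lra | lra].
have : 0 <= F t (1 / d ^+ 2) * d ^+ 2.
  rewrite e hs2; move: h2; rewrite -expr2; nra.
by rewrite pmulr_lge0.
Qed.
End Main.
End H.

Lemma min0 (R : realType) (u v : R) : 0 <= u -> 0 <= v -> u = 0 \/ v = 0 -> Num.min u v = 0.
Proof. by move=> hu hv [->|->]; [rewrite min_l | rewrite min_r]. Qed.

Theorem lemma3p1 (R : realType) (m L alpha delta lamS : R)
  (hm : 0 < m) (hmL : m < L) (halpha : 0 < alpha)
  (hd0 : 0 < delta) (hd1 : delta < 1)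
  (hlam : 0 <= lamS <= 2 / delta ^+ 2)
  (hF1 : 0 <= Fq m L alpha delta (rho_star m L alpha delta) lamS)
  (hF2 : 0 <= Fq m L alpha delta (- rho_star m L alpha delta) lamS) :
  [/\ Num.min (Fq m L alpha delta (rho_star m L alpha delta) lamS)
              (Fq m L alpha delta (- rho_star m L alpha delta) lamS) = 0,
      0 < lamS < 2 / delta ^+ 2 &
      (0 < Num.max (Fq m L alpha delta (rho_star m L alpha delta) lamS)
                   (Fq m L alpha delta (- rho_star m L alpha delta) lamS) ->
       rho_star m L alpha delta = rhoGD m L alpha delta)].
Proof.
set rS := rho_star m L alpha delta.
set F := Fq m L alpha delta.
set G := rhoGD m L alpha delta.
have hL : 0 < L by exact: lt_trans hm hmL.
have hd2 : 0 < delta ^+ 2 by rewrite exprn_gt0.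
have hGx : 1 - alpha * m * (1 - delta) <= G by rewrite /G le_max lexx.
have hGy : alpha * L * (1 + delta) - 1 <= G by rewrite /G le_max lexx orbT.
have hxy : alpha * m * (1 - delta) < alpha * L * (1 + delta).
  rewrite -!mulrA ltr_pM2l //.
  have := mulr_gt0 hm hd0; have := mulr_gt0 hL hd0.
  rewrite !mulrBr !mulrDr !mulr1; lra.
have hne : (rho_set m L alpha delta !=set0)%classic.
  pose K := 2 * alpha * (m + L) + alpha * (L - m).
  have hK : 0 <= K.
    have h1 := mulr_gt0 halpha (addr_gt0 hm hL).
    have h2 : 0 < alpha * (L - m) by rewrite mulr_gt0 // subr_gt0.
    rewrite /K; lra.
  pose w := 1 + `|G| + K.
  exists w; split.
    rewrite -/G; have := ler_norm G; have := normr_ge0 G; rewrite /w; lra.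
  exists (1 / delta ^+ 2); split.
    apply/andP; split; first by rewrite divr_ge0 ?ltW.
    by rewrite ler_pM2r ?invr_gt0 // ler1n.
  split; apply: (Fw _ _ _ _ _ hm hmL halpha hd0 hd1).
    rewrite -/K; have -> : w - 1 = `|G| + K by rewrite /w; ring.
    rewrite (ger0_norm (addr_ge0 (normr_ge0 G) hK)); have := normr_ge0 G; lra.
  rewrite -/K; have -> : - w - 1 = - (`|G| + K + 2) by rewrite /w; ring.
  have h2 : 0 <= `|G| + K + 2 by have := normr_ge0 G; lra.
  rewrite normrN (ger0_norm h2); have := normr_ge0 G; lra.
have hlb : lbound (rho_set m L alpha delta) G by move=> r [].
have hge : G <= rS by exact: lb_le_inf hne hlb.
have hinf : forall r, rho_set m L alpha delta r -> rS <= r.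
  by move=> r hr; apply: ge_inf => //; exists G.
have hX : 0 < alpha * (L - m) by rewrite mulr_gt0 // subr_gt0.
have hl0 : lamS != 0.
  apply/eqP => e; move: hF1; rewrite e.
  have -> : Fq m L alpha delta rS 0 = - (alpha * (L - m)) ^+ 2 by rewrite /Fq; ring.
  rewrite oppr_ge0 leNgt => /negP; apply; exact: exprn_gt0.
have hl2 : lamS != 2 / delta ^+ 2.
  apply/eqP => e; move: hF2; rewrite e => h0.
  have [A eA] : exists A, A = m * L * alpha ^+ 2 * (1 - delta ^+ 2) by eexists.
  have [B eB] : exists B, B = alpha * (m + L) * (1 + rS) by eexists.
  have [Cy eC] : exists C, C = alpha * (m + L) * (alpha * L * (1 + delta)) by eexists.
  have eF : delta ^+ 2 * Fq m L alpha delta (- rS) (2 / delta ^+ 2) =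
     - (alpha * (L - m) * delta) ^+ 2 + 4 * A - 4 * B.
    rewrite /Fq eA eB; field; by rewrite gt_eqF.
  have h1 : Cy <= B.
    rewrite eC eB; apply: ler_wpM2l; first by rewrite ltW // mulr_gt0 // addr_gt0.
    lra.
  have h2 : A < Cy.
    have eCA : Cy - A = alpha ^+ 2 * L * (1 + delta) * (L + m * delta) by rewrite eC eA; ring.
    rewrite -subr_gt0 eCA !mulr_gt0 ?exprn_gt0 ?addr_gt0 ?mulr_gt0 //; lra.
  have h3 := mulr_ge0 (ltW hd2) h0.
  have h4 := sqr_ge0 (alpha * (L - m) * delta).
  rewrite eF in h3; lra.
have hlamin : 0 < lamS < 2 / delta ^+ 2.
  case/andP: hlam => a1 a2; rewrite lt_neqAle eq_sym hl0 a1 /= lt_neqAle hl2 a2 //.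
have hstrict : G < rS -> F rS lamS = 0 /\ F (- rS) lamS = 0.
  move=> hlt.
  have nodec : forall lam, 0 <= lam <= 2 / delta ^+ 2 -> 0 < F rS lam -> 0 < F (- rS) lam -> False.
    move=> lam hl p q.
    have [r hr hrs] := decrease _ _ _ _ _ hd0 rS lam hlt hl p q.
    have := hinf r hrs; lra.
  have hlp : 0 < lamS by case/andP: hlamin.
  case: (eqVneq (F rS lamS) 0) => e1; case: (eqVneq (F (- rS) lamS) 0) => e2 //.
  - have p2 : 0 < F (- rS) lamS by rewrite lt_neqAle eq_sym e2.
    have hD : Dl R m L alpha delta rS lamS != 0.
      apply/eqP => hD.
      case: (nondeg _ _ _ _ _ hm hmL halpha hd0 hd1 rS lamS hlp e1 hD) => e; lra.
    have [lam' [hl' q1 q2]] := perturb_lam _ _ _ _ _ _ _ _ hlamin e1 hD p2.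
    by case: (nodec lam' hl' q1 q2).
  - have p1 : 0 < F rS lamS by rewrite lt_neqAle eq_sym e1.
    have hD : Dl R m L alpha delta (- rS) lamS != 0.
      apply/eqP => hD.
      case: (nondeg _ _ _ _ _ hm hmL halpha hd0 hd1 (- rS) lamS hlp e2 hD) => e; lra.
    have [lam' [hl' q1 q2]] := perturb_lam _ _ _ _ _ _ _ _ hlamin e2 hD p1.
    by case: (nodec lam' hl' q2 q1).
  - have p1 : 0 < F rS lamS by rewrite lt_neqAle eq_sym e1.
    have p2 : 0 < F (- rS) lamS by rewrite lt_neqAle eq_sym e2.
    by case: (nodec lamS hlam p1 p2).
split => //.
- move: (hge); rewrite le_eqVlt => /orP[/eqP eG|hlt]; last first.
    by have [-> ->] := hstrict hlt; rewrite minxx.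
  apply: min0 => //.
  have [hxy'|hxy'] := leP (alpha * L * (1 + delta) - 1) (1 - alpha * m * (1 - delta)).
  + left; apply/eqP; rewrite eq_le hF1 andbT.
    have -> : rS = 1 - alpha * m * (1 - delta) by rewrite -eG /G /rhoGD max_l.
    rewrite /F GD1 oppr_le0; exact: sqr_ge0.
  + right; apply/eqP; rewrite eq_le hF2 andbT.
    have -> : - rS = 1 - alpha * L * (1 + delta).
      by rewrite -eG /G /rhoGD max_r ?ltW // opprB.
    rewrite /F GD2 oppr_le0; exact: sqr_ge0.
- move=> hmax.
  move: (hge); rewrite le_eqVlt => /orP[/eqP eG|hlt]; first by [].
  by move: hmax; have [-> ->] := hstrict hlt; rewrite maxxx ltxx.
Qed.
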